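(* For every integer $d\ge 2$ and every integer $k$ with $d-1\le k\le\binom{d}{2}$, there exists a chopped vertical strip with $d$ vertices (hence $d-2$ cuts) having exactly $k$ short geodesics.
   Context: A chopped vertical strip with $d$ vertices consists of complex numbers $z_j=x_j+\sqrt{-1}\,y_j$, $j=1,\dots,d$, with pairwise distinct real parts and pairwise distinct imaginary parts, ordered so that $x_1<x_2<\dots<x_d$, together with, for each $j=2,\dots,d-1$, a choice of a vertical ray (cut) starting at $z_j$, either $\{x_j+\sqrt{-1}\,s: s\ge y_j\}$ or $\{x_j+\sqrt{-1}\,s: s\le y_j\}$. A short geodesic of the chopped strip is a straight segment $[z_i,z_j]$, $i\neq j$, that does not intersect any cut except possibly at its own endpoints. *)

(* Defs.v *)
From HB Require Import structures.
From mathcomp Require Import all_boot all_order all_algebra.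
From mathcomp Require Import boolp reals.
Set Implicit Arguments. Unset Strict Implicit. Unset Printing Implicit Defensive.
Import Order.TTheory GRing.Theory Num.Theory.
Local Open Scope ring_scope.

(* Vertices are indexed 0-based by 'I_d: vertex j has z_j = (x j, y j).
   Cuts sit at the interior vertices j with 0 < j < d-1.
   up j = true means the cut is the upward ray {x_j + i s : s >= y_j},
   up j = false means the downward ray {x_j + i s : s <= y_j}. *)

Definition chopped_strip (R : realType) (d : nat) (x y : 'I_d -> R) : Prop :=
  (forall i j : 'I_d, (i < j)%N -> x i < x j) /\ injective y.

Definition is_cut_vertex (d : nat) (m : 'I_d) : bool := (0 < m)%N && (m < d.-1)%N.

Definition on_cut (R : realType) (d : nat) (x y : 'I_d -> R) (up : 'I_d -> bool)
  (m : 'I_d) (p : R * R) : Prop :=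
  p.1 = x m /\ (if up m then y m <= p.2 else p.2 <= y m).

Definition seg_pt (R : realType) (d : nat) (x y : 'I_d -> R) (i j : 'I_d) (t : R)
  : R * R :=
  ((1 - t) * x i + t * x j, (1 - t) * y i + t * y j).

Definition short_geodesic (R : realType) (d : nat) (x y : 'I_d -> R)
  (up : 'I_d -> bool) (i j : 'I_d) : Prop :=
  i != j /\
  forall m : 'I_d, is_cut_vertex m ->
  forall t : R, 0 <= t <= 1 ->
    on_cut x y up m (seg_pt x y i j t) ->
    seg_pt x y i j t = (x i, y i) \/ seg_pt x y i j t = (x j, y j).

Definition num_short_geodesics (R : realType) (d : nat) (x y : 'I_d -> R)
  (up : 'I_d -> bool) : nat :=
  #|[set p : 'I_d * 'I_d | (p.1 < p.2)%N && `[< short_geodesic x y up p.1 p.2 >]]|.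

(* Main.v *)
Require Import Defs.
From HB Require Import structures.
From mathcomp Require Import all_boot all_order all_algebra.
From mathcomp Require Import boolp reals.
From mathcomp Require Import ring lra zify.
Import Order.TTheory GRing.Theory Num.Theory.
Set Implicit Arguments. Unset Strict Implicit.
Local Open Scope ring_scope.

Definition Dd (R : realType) (d : nat) (x y : 'I_d -> R) (i j m : 'I_d) : R :=
  (x j - x i) * y m - ((x j - x m) * y i + (x m - x i) * y j).

Lemma short_iff (R : realType) (d : nat) (x y : 'I_d -> R) (up : 'I_d -> bool)
  (i j : 'I_d) :
  (forall a b : 'I_d, (a < b)%N -> x a < x b) -> (i < j)%N ->
  short_geodesic x y up i j <->
  (forall m : 'I_d, (i < m < j)%N -> if up m then 0 < Dd x y i j m else Dd x y i j m < 0).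
Proof.
move=> hx ij; have xij := hx _ _ ij.
split.
- move=> [_ Hs] m /andP[im mj].
  have xim := hx _ _ im; have xmj := hx _ _ mj.
  have cm : is_cut_vertex m.
    rewrite /is_cut_vertex; have := ltn_ord j; move=> hj; apply/andP; split; lia.
  set t := (x m - x i) / (x j - x i).
  have hne : x j - x i != 0 by rewrite subr_eq0 gt_eqF.
  have t0 : 0 <= t by rewrite divr_ge0 // subr_ge0 ltW.
  have t1 : t <= 1 by rewrite ler_pdivrMr ?subr_gt0 // mul1r lerD2r ltW.
  have p1 : (seg_pt x y i j t).1 = x m.
    rewrite /seg_pt /= /t; field; done.
  have p2 : (x j - x i) * (seg_pt x y i j t).2 = (x j - x m) * y i + (x m - x i) * y j.
    rewrite /seg_pt /= /t; field; done.
  have contra : on_cut x y up m (seg_pt x y i j t) -> False.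
    move=> oc; have [E|E] := Hs m cm t (introT andP (conj t0 t1)) oc.
      by move: p1; rewrite E /= => e; move: xim; rewrite e ltxx.
    by move: p1; rewrite E /= => e; move: xmj; rewrite e ltxx.
  rewrite /Dd; case hu: (up m).
  + rewrite ltNge; apply/negP => HD; apply: contra; split => //; rewrite hu.
    move: HD; rewrite -p2; nra.
  + rewrite ltNge; apply/negP => HD; apply: contra; split => //; rewrite hu.
    move: HD; rewrite -p2; nra.
- move=> H; split; first by rewrite neq_ltn ij.
  move=> m cm t /andP[t0 t1] [p1 p2]; move: p1 p2; rewrite /seg_pt /= => p1 p2.
  case: (ltngtP m i) => mi.
  + exfalso; clear p2; have := hx _ _ mi; nra.
  + case: (ltngtP m j) => mj.
    * exfalso; have := H m (introT andP (conj mi mj)); rewrite /Dd -p1.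
      case: (up m) p2 => p2 hd; nra.
    * exfalso; clear p2; have := hx _ _ mj; nra.
    * right.
      have et : t = 1.
        have mj' : m = j by apply: val_inj.
        rewrite mj' in p1.
        have : (t - 1) * (x j - x i) = 0 by rewrite -[RHS](subrr (x j)) -{2}p1; ring.
        move/eqP; rewrite mulf_eq0 => /orP[]; first by rewrite subr_eq0 => /eqP.
        by rewrite subr_eq0 gt_eqF.
      by rewrite et /seg_pt subrr !mul0r !add0r !mul1r.
  + left.
    have et : t = 0.
      have mi' : m = i by apply: val_inj.
      rewrite mi' in p1.
      have : t * (x j - x i) = 0 by rewrite -[RHS](subrr (x i)) -{2}p1; ring.
      move/eqP; rewrite mulf_eq0 => /orP[]; first by move/eqP.
      by rewrite subr_eq0 gt_eqF.
    by rewrite et /seg_pt subr0 !mul0r !addr0 !mul1r.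
Qed.


Local Open Scope nat_scope.
Lemma sum_iv (D a b : nat) : \sum_(i < D) ((a <= i) && (i < b) : nat) = minn b D - a.
Proof.
elim: D => [|D IH]; first by rewrite big_ord0; lia.
rewrite big_ord_recr /= IH.
case: (leqP a D) => h1; case: (ltnP D b) => h2 /=; lia.
Qed.

Lemma sumT (p m : nat) : \sum_(j < m) (j - minn p j.-1) =
  if (m <= p.+1) then m.-1 else p + 'C(m - p, 2).
Proof.
elim: m => [|m IH]; first by rewrite big_ord0.
rewrite big_ord_recr /= IH.
case: (leqP m p.+1) => h1; case: (leqP m.+1 p.+1) => h2.
- lia.
- have -> : (m.+1 - p = 2)%N by lia.
  rewrite (_ : 'C(2, 2) = 1%N) //; lia.
- lia.
- have -> : (m.+1 - p = (m - p).+1)%N by lia.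
  rewrite binS bin1; lia.
Qed.

Lemma outer (p n s D : nat) : D = (p + n).+1 -> (1 <= n) ->
  \sum_(j < D) (if (j : nat) == D.-1 then s.+1 else j - minn p j.-1) = p + 'C(n, 2) + s.+1.
Proof.
move=> -> hn; rewrite big_ord_recr /= eqxx.
rewrite (eq_bigr (fun j : 'I_(p + n) => (j : nat) - minn p (j : nat).-1)); last first.
  by move=> j _; rewrite /= (_ : ((j : nat) == p + n) = false) //; apply/negbTE; rewrite neq_ltn ltn_ord.
rewrite sumT.
case: (leqP (p + n) p.+1) => h.
- have hn1 : n = 1%N by lia.
  by rewrite hn1 bin_small //; lia.
- have -> : (p + n - p = n)%N by lia. lia.
Qed.

Lemma exists_ns (N k : nat) : (1 <= N)%N -> (N <= k)%N -> (k <= 'C(N.+1, 2))%N ->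
  exists n s, [/\ (1 <= n)%N, (n <= N)%N, (s < n)%N & k = N.+1 - n + 'C(n, 2) + s].
Proof.
elim: N k => [|N IH] k h1 h2 h3; first lia.
case: N IH h1 h2 h3 => [|N] IH h1 h2 h3.
  exists 1%N, 0%N; rewrite bin_small //; split => //.
  move: h3; rewrite binS bin1 bin_small //; lia.
have eC : 'C(N.+3, 2) = ('C(N.+2, 2) + N.+2)%N by rewrite binS bin1.
case: (leqP k ('C(N.+2, 2)).+1) => hk.
- have [n [s [a b c e]]] := IH k.-1 isT ltac:(lia) ltac:(lia).
  exists n, s; split; lia.
- exists N.+2, (k - 1 - 'C(N.+2, 2))%N; split; lia.
Qed.

Local Open Scope ring_scope.
Ltac bcase := repeat (match goal with
 | |- context [(?a <= ?b)%N] => case: (leqP a b) => ?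
 | |- context [(?a == ?b)] => case: (eqVneq a b) => ?
 end); try (by []); try (simpl; lia); try (exfalso; lia).

Section Constr.
Variables (R : realType) (d n s : nat).
Hypotheses (hd : (2 <= d)%N) (hn1 : (1 <= n)%N) (hnd : (n <= d.-1)%N) (hs : (s < n)%N).
Let p := (d.-1 - n)%N.
Let H := (2 * (n - s)).+1.
Definition xc (m : 'I_d) : R := (m : nat)%:R.
Definition yc (m : 'I_d) : R :=
  (if (m : nat) == d.-1 then H else 0%N)%:R - 2 * (m : nat)%:R ^+ 2.
Definition upc (m : 'I_d) : bool := (p < m)%N.
Definition Hj (j : nat) : nat := if j == d.-1 then H else 0%N.

Lemma Dval (i j m : 'I_d) : (i < m)%N -> (m < j)%N ->
  Dd xc yc i j m = ((m : nat)%:R - (i : nat)%:R) *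
     ((2 * (j - m) * (j - i))%:R - (Hj j)%:R).
Proof.
move=> im mj; have jd := ltn_ord j.
have ni : ((i : nat) == d.-1) = false by apply/negbTE; lia.
have nm : ((m : nat) == d.-1) = false by apply/negbTE; lia.
rewrite /Dd /xc /yc /Hj ni nm.
rewrite !natrM !natrB; [|lia|lia].
set hh := (if _ then _ else _)%:R.
ring.
Qed.

Lemma Dpos (i j m : 'I_d) : (i < m)%N -> (m < j)%N ->
  (0 < Dd xc yc i j m) = (Hj j < 2 * (j - m) * (j - i))%N.
Proof.
move=> im mj; rewrite Dval // pmulr_rgt0 ?subr_gt0 ?ltr_nat //.
Qed.

Lemma Dneg (i j m : 'I_d) : (i < m)%N -> (m < j)%N ->
  (Dd xc yc i j m < 0) = (2 * (j - m) * (j - i) < Hj j)%N.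
Proof.
move=> im mj; rewrite Dval // pmulr_rlt0 ?subr_lt0 ?ltr_nat //.
by rewrite subr_gt0 ltr_nat.
Qed.


Definition Sb (i j : nat) : bool :=
  (j == i.+1) || ((p <= i)%N && ((j != d.-1) || (H < 2 * (j - i))%N)).

Lemma comb (i j : 'I_d) : (i < j)%N ->
  (forall m : 'I_d, (i < m < j)%N ->
     if upc m then (Hj j < 2 * (j - m) * (j - i))%N
     else (2 * (j - m) * (j - i) < Hj j)%N) <-> Sb i j.
Proof.
move=> ij; have jd := ltn_ord j; split.
- move=> Hm; apply/negPn/negP => nS.
  move: nS; rewrite /Sb negb_or negb_and => /andP[nji].
  case: (leqP p i) => pi /=.
  + rewrite negb_or negbK => /andP[/eqP jd1 hH].
    have md : (j.-1 < d)%N by lia.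
    have := Hm (Ordinal md); rewrite /upc /Hj /= jd1 eqxx.
    have -> : (p < d.-1.-1)%N by lia.
    have -> : (d.-1 - d.-1.-1 = 1)%N by lia.
    move=> h; have : (i < d.-1.-1 < d.-1)%N by lia.
    move=> /h; rewrite -jd1; lia.
  + move=> _.
    have md : (i.+1 < d)%N by lia.
    have := Hm (Ordinal md); rewrite /upc /=.
    have -> : (p < i.+1)%N = false by lia.
    have -> : (i < i.+1 < j)%N by lia.
    move=> /(_ isT).
    rewrite /Hj; case: eqP => [jd1|jd1] h2; last by rewrite ltn0 in h2.
    have e1 : (n.+1 <= j - i)%N by rewrite /p in pi; lia.
    move: h2; rewrite /H.
    set e := (j - i)%N in e1 *.
    have -> : (j - i.+1 = e.-1)%N by rewrite /e; lia.
    nia.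
- move=> /orP[/eqP e | /andP[pi c]] m /andP[im mj]; first lia.
  rewrite /upc; have -> : (p < m)%N by lia.
  move: c; rewrite /Hj; case: eqP => ej /= c.
  + nia.
  + nia.
Qed.


Lemma xc_inc (a b : 'I_d) : (a < b)%N -> xc a < xc b.
Proof. by rewrite /xc ltr_nat. Qed.

Lemma short_Sb (i j : 'I_d) : (i < j)%N -> short_geodesic xc yc upc i j <-> Sb i j.
Proof.
move=> ij; rewrite short_iff //; last exact: xc_inc.
rewrite -comb //; split => h m /andP[im mj]; have := h m (introT andP (conj im mj));
  by rewrite Dpos // Dneg.
Qed.

Lemma inner (j : 'I_d) : (\sum_(i < d) ((((i : nat) < j)%N && Sb i j) : nat) =
  if (j : nat) == d.-1 then s.+1 else j - minn p j.-1)%N.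
Proof.
have jd := ltn_ord j.
case: eqP => ej.
- rewrite (eq_bigr (fun i : 'I_d => (((p <= i) && (i < p + s))%N : nat)
     + (((d.-2 <= i) && (i < d.-1))%N : nat))%N); last first.
    move=> i _; rewrite /Sb ej /H /p; bcase.
  rewrite big_split /= !sum_iv /p; lia.
- rewrite (eq_bigr (fun i : 'I_d => (((minn p j.-1 <= i) && (i < j))%N : nat))); last first.
    move=> i _; rewrite /Sb; bcase.
  rewrite sum_iv; lia.
Qed.


Lemma yc_inj : injective yc.
Proof.
move=> a b; rewrite /yc => E; apply: ord_inj.
case ea: ((a : nat) == d.-1) in E; case eb: ((b : nat) == d.-1) in E.
- by rewrite (eqP ea) (eqP eb).
- exfalso.
  have : (H + 2 * (b : nat) ^ 2 = 2 * (a : nat) ^ 2)%N.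
    apply/eqP; rewrite -(eqr_nat R) !natrD !natrM; apply/eqP.
    move: E; rewrite /= !expr2; nra.
  rewrite /H; lia.
- exfalso.
  have : (H + 2 * (a : nat) ^ 2 = 2 * (b : nat) ^ 2)%N.
    apply/eqP; rewrite -(eqr_nat R) !natrD !natrM; apply/eqP.
    move: E; rewrite /= !expr2; nra.
  rewrite /H; lia.
- have : ((a : nat) ^ 2 = (b : nat) ^ 2)%N.
    apply/eqP; rewrite -(eqr_nat R) !natrM; apply/eqP.
    move: E; rewrite /= !expr2; nra.
  by move/eqP; rewrite eqn_exp2r // => /eqP.
Qed.

Lemma chop : chopped_strip xc yc.
Proof. split; [exact: xc_inc | exact: yc_inj]. Qed.

Lemma count_val : num_short_geodesics xc yc upc = (p + 'C(n, 2) + s.+1)%N.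
Proof.
rewrite /num_short_geodesics.
rewrite (_ : [set q | _ ] = [set q : 'I_d * 'I_d | ((q.1 < q.2)%N && Sb q.1 q.2)]); last first.
  apply/setP => q; rewrite !inE; case: ltnP => h //=.
  by apply/asboolP/idP => /(short_Sb h).
rewrite -sum1_card.
transitivity (\sum_(i < d) \sum_(j < d) ((((i : nat) < j)%N && Sb i j) : nat))%N.
  rewrite pair_big big_mkcond; apply: eq_big => // q _; rewrite inE.
  by case: (_ && _).
rewrite exchange_big /=.
rewrite (eq_bigr (fun j : 'I_d => if (j : nat) == d.-1 then s.+1 else j - minn p j.-1)%N);
  last by move=> j _; rewrite inner.
apply: outer => //; rewrite /p; lia.
Qed.

End Constr.

Theorem mainTheorem5 (R : realType) (d k : nat) :
  (2 <= d)%N -> (d.-1 <= k)%N -> (k <= 'C(d, 2))%N ->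
  exists (x y : 'I_d -> R) (up : 'I_d -> bool),
    chopped_strip x y /\ num_short_geodesics x y up = k.
Proof.
move=> hd h1 h2.
have [n [s [a b c e]]] : exists n s, [/\ (1 <= n)%N, (n <= d.-1)%N, (s < n)%N &
    k = d.-1.+1 - n + 'C(n, 2) + s]%N.
  apply: exists_ns; [lia | lia | by rewrite prednK //; lia].
exists (xc R (d:=d)), (yc R n s), (upc n).
split; first exact: chop.
rewrite count_val //; lia.
Qed.
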